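(* Let $G$ be a connected graph of order $n\ge 2$. (a) If $O_{\rm SR}(G)=\mathcal{M}$, then $\textnormal{sdim}(G)\le\lfloor n/2\rfloor$. (b) If $\textnormal{sdim}(G)\ge\lceil n/2\rceil+1$, then $O_{\rm SR}(G)=\mathcal{B}$.
   Context: All graphs are finite, simple and undirected. A set $S\subseteq V(G)$ is a strong resolving set of a connected graph $G$ if for all distinct $x,y\in V(G)$ there exists $z\in S$ such that $x$ lies on a $y$–$z$ geodesic or $y$ lies on an $x$–$z$ geodesic; $\textnormal{sdim}(G)$ is the minimum cardinality of a strong resolving set. The Maker–Breaker strong resolving game on $G$: Maker and Breaker alternately select a not-yet-chosen vertex of $G$; Maker wins if the vertices he selects contain a strong resolving set of $G$, Breaker wins otherwise. In the M-game Maker moves first, in the B-game Breaker moves first. $O_{\rm SR}(G)=\mathcal{M}$ if Maker has a winning strategy in both games, $\mathcal{B}$ if Breaker has a winning strategy in both, and $\mathcal{N}$ if the first player has a winning strategy in each. *)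

(* Defs.v *)
From mathcomp Require Import all_boot.
Set Implicit Arguments. Unset Strict Implicit. Unset Printing Implicit Defensive.

Section Graph.
Variables (T : finType) (e : rel T).

Definition simple_graph := symmetric e /\ irreflexive e.
Definition connected_graph := forall x y : T, connect e x y.

Fixpoint within (k : nat) (x y : T) : bool :=
  match k with
  | 0 => x == y
  | k'.+1 => (x == y) || [exists z, e x z && within k' z y]
  end.

(* shortest-path distance (correct for connected graphs, where d < #|T|) *)
Definition dist (x y : T) : nat := find (fun k => within k x y) (iota 0 #|T|).

Definition on_geodesic (y x z : T) : bool := dist y x + dist x z == dist y z.

Definition strong_resolving (S : {set T}) : bool :=
  [forall x, forall y, (x != y) ==>
     [exists z in S, on_geodesic y x z || on_geodesic x y z]].

(* strong metric dimension: min cardinality of a strong resolving set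
   (V(G) itself is one when G is connected) *)
Definition sdim : nat :=
  \big[minn/#|T|]_(S : {set T} | strong_resolving S) #|S|.

(* Maker-Breaker strong resolving game.  mwin n M B mturn: with M (Maker's)
   and B (Breaker's) chosen, n = number of free vertices, and mturn telling
   whether Maker is to move, Maker has a winning strategy.  The game ends when
   all vertices are chosen; Maker wins iff his vertices contain a strong
   resolving set (equivalently, form one, since the property is upward closed). *)
Fixpoint mwin (n : nat) (M B : {set T}) (mturn : bool) : bool :=
  match n with
  | 0 => strong_resolving M
  | n'.+1 =>
    if mturn then [exists v, (v \notin M :|: B) && mwin n' (v |: M) B false]
    else [forall v, (v \notin M :|: B) ==> mwin n' M (v |: B) true]
  end.

Definition maker_wins_Mgame : bool := mwin #|T| set0 set0 true.
Definition maker_wins_Bgame : bool := mwin #|T| set0 set0 false.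

(* O_SR(G) = M : Maker wins both games; O_SR(G) = B : Breaker wins both
   (finite games without draws: Breaker wins iff Maker has no winning strategy) *)
Definition outcome_M : Prop := maker_wins_Mgame /\ maker_wins_Bgame.
Definition outcome_B : Prop := ~~ maker_wins_Mgame /\ ~~ maker_wins_Bgame.

End Graph.

(* Main.v *)
Require Import Defs.
From mathcomp Require Import all_boot.

Lemma bigmin_seq_le (I : eqType) (r : seq I) (P : pred I) (F : I -> nat) m x :
  x \in r -> P x -> \big[minn/m]_(i <- r | P i) F i <= F x.
Proof.
elim: r => [//|y r IH]; rewrite inE big_cons => /orP [/eqP <- Px|xr Px].
  by rewrite Px geq_minl.
case: (P y); last exact: IH.
by rewrite (leq_trans (geq_minr _ _)) // IH.
Qed.

Lemma sdim_le (T : finType) (e : rel T) (S : {set T}) :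
  strong_resolving e S -> sdim e <= #|S|.
Proof.
move=> HS; rewrite /sdim.
have := @bigmin_seq_le _ (index_enum {set T}) (strong_resolving e) (fun S => #|S|) #|T| S.
apply; last exact: HS.
exact: mem_index_enum.
Qed.

Lemma mwin_bound (T : finType) (e : rel T) n (M B : {set T}) (mt : bool) :
  #|M :|: B| + n = #|T| -> mwin e n M B mt ->
  exists M', strong_resolving e M' /\
     #|M'| <= #|M| + (if mt then uphalf n else n./2).
Proof.
elim: n M B mt => [|n IH] M B mt Hc /=.
  by move=> H; exists M; split => //; case: mt; rewrite /= addn0.
case: mt.
  case/existsP => v /andP [Hv Hw].
  have Hc' : #|v |: M :|: B| + n = #|T|.
    by rewrite -setUA cardsU1 Hv add1n addSnnS.
  have [M' [H1 H2]] := IH _ _ _ Hc' Hw.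
  exists M'; split => //; apply: (leq_trans H2).
  rewrite cardsU1 /=; case: (v \in M) => /=; rewrite ?add1n ?add0n ?addSn //.
  - by rewrite leq_add2l leqW.
  - by rewrite addnS.
move/forallP => H.
case: (pickP (fun v => v \notin M :|: B)) => [v Hv | H0].
  have Hc' : #|M :|: (v |: B)| + n = #|T|.
    by rewrite setUCA cardsU1 Hv add1n addSnnS.
  have [M' [H1 H2]] := IH _ _ _ Hc' (implyP (H v) Hv).
  by exists M'.
exfalso.
have HT : M :|: B = setT.
  by apply/setP => x; rewrite in_setT; move: (H0 x) => /= /negbFE ->.
by move: Hc; rewrite HT cardsT => /eqP; rewrite -{2}(addn0 #|T|) eqn_add2l.
Qed.

Theorem mainTheorem7 (T : finType) (e : rel T) :
  simple_graph e -> connected_graph e -> 2 <= #|T| ->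
  (outcome_M e -> sdim e <= #|T| ./2) /\
  ((uphalf #|T|).+1 <= sdim e -> outcome_B e).
Proof.
move=> _ _ _.
have H0 : #|(set0 : {set T}) :|: set0| + #|T| = #|T| by rewrite setU0 cards0.
split.
  case=> _ HB.
  have [M' [H1 H2]] := @mwin_bound _ _ _ _ _ _ H0 HB.
  by rewrite (leq_trans (sdim_le _ _ _ H1)) // -(add0n (_./2)) -(cards0 T).
move=> Hs; split; apply/negP => Hw.
  have [M' [H1 H2]] := @mwin_bound _ _ _ _ _ _ H0 Hw.
  move: (leq_trans (sdim_le _ _ _ H1) H2); rewrite cards0 add0n.
  by move=> Hle; move: (leq_trans Hs Hle); rewrite ltnn.
have [M' [H1 H2]] := @mwin_bound _ _ _ _ _ _ H0 Hw.
move: (leq_trans (sdim_le _ _ _ H1) H2); rewrite cards0 add0n.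
move=> Hle; have := leq_trans Hs Hle.
by rewrite ltnNge uphalf_half leq_addl.
Qed.
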